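(* Let $d\in\mathbb{N}$, let $A$ be a $d\times d$ reclusive matrix, $\mathcal{P}_{A}$ its reclusive partition, and $\Delta_{A}$ its reclusive distance. Then for every $\vec{p}\in\mathbb{R}^{d}$, $|\mathcal{N}_{\Delta_{A}/2}(\vec{p})|\leq d+1$.
   Context: A $d\times d$ matrix $A=(a_{ij})$ is reclusive if $a_{ij}=0$ for $i>j$, $a_{ii}=1$ for all $i$, and $a_{ij}>a_{ik}>0$ for all $i\le j<k$. Its lattice is $L_A=\{A\vec{v}:\vec{v}\in\mathbb{Z}^d\}$ and its reclusive partition is $\mathcal{P}_A=\{\vec{a}+[0,1)^d:\vec{a}\in L_A\}$ (a partition of $\mathbb{R}^d$). Its reclusive distance is $\Delta_A=\min\{\delta_1,\delta_2,\delta_3,\delta_4\}$ where $\delta_1=1$, $\delta_2=\min_{k\in[d]}\min_{k<j\le d}(1-a_{kj})$, $\delta_3=\min_{k\in[d]}\min_{k<j\le d}a_{kj}$, $\delta_4=\min_{k\in[d]}\min_{k<j<j'\le d}(a_{kj}-a_{kj'})$, with $\min\emptyset=\infty$. On $\mathbb{R}^d$ use $d_{max}(\vec{x},\vec{y})=\max_i|x_i-y_i|$, $\overline{B}_{\epsilon}(\vec{p})=\{\vec{x}:d_{max}(\vec{x},\vec{p})\le\epsilon\}$ and $\mathcal{N}_{\epsilon}(\vec{p})=\{X\in\mathcal{P}_A: X\cap\overline{B}_{\epsilon}(\vec{p})\neq\emptyset\}$. *)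

(* Defs.v *)
From HB Require Import structures.
From mathcomp Require Import all_boot all_order all_algebra.
From mathcomp Require Import boolp classical_sets functions cardinality reals constructive_ereal.
Set Implicit Arguments. Unset Strict Implicit. Unset Printing Implicit Defensive.
Import Order.TTheory GRing.Theory Num.Theory.
Local Open Scope ring_scope.
Local Open Scope classical_set_scope.

Section Reclusive.
Variable R : realType.
Variable d : nat.

Definition reclusive (A : 'M[R]_d) : Prop :=
  [/\ (forall i j : 'I_d, (j < i)%N -> A i j = 0),
      (forall i : 'I_d, A i i = 1) &
      (forall i j k : 'I_d, (i <= j)%N -> (j < k)%N -> A i j > A i k /\ A i k > 0)].

Definition lattice (A : 'M[R]_d) : set ('I_d -> R) :=
  [set a | exists v : 'I_d -> int, a = fun i => \sum_(j < d) A i j * (v j)%:~R].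

Definition tile (a : 'I_d -> R) : set ('I_d -> R) :=
  [set x | forall i, a i <= x i < a i + 1].

Definition reclusive_partition (A : 'M[R]_d) : set (set ('I_d -> R)) :=
  [set X | exists2 a, lattice A a & X = tile a].

Definition cball (eps : R) (p : 'I_d -> R) : set ('I_d -> R) :=
  [set x | forall i, `|x i - p i| <= eps].

Definition neighbours (A : 'M[R]_d) (eps : R) (p : 'I_d -> R) : set (set ('I_d -> R)) :=
  [set X | reclusive_partition A X /\ X `&` cball eps p !=set0].

(* Reclusive distance, with min over the empty set = +oo. *)
Local Open Scope ereal_scope.
Definition rdelta1 : \bar R := 1%:E.
Definition rdelta2 (A : 'M[R]_d) : \bar R :=
  \big[Order.min/+oo]_(k < d) \big[Order.min/+oo]_(j < d | (k < j)%N) (1 - A k j)%:E.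
Definition rdelta3 (A : 'M[R]_d) : \bar R :=
  \big[Order.min/+oo]_(k < d) \big[Order.min/+oo]_(j < d | (k < j)%N) (A k j)%:E.
Definition rdelta4 (A : 'M[R]_d) : \bar R :=
  \big[Order.min/+oo]_(k < d) \big[Order.min/+oo]_(j < d | (k < j)%N)
     \big[Order.min/+oo]_(j' < d | (j < j')%N) (A k j - A k j')%:E.
Definition rdist (A : 'M[R]_d) : \bar R :=
  Order.min (Order.min rdelta1 (rdelta2 A)) (Order.min (rdelta3 A) (rdelta4 A)).
End Reclusive.

(* Main.v *)
Require Import Defs.
From HB Require Import structures.
From mathcomp Require Import all_boot all_order all_algebra.
From mathcomp Require Import boolp classical_sets functions cardinality reals constructive_ereal.
From mathcomp Require Import zify lra.
Import Order.TTheory GRing.Theory Num.Theory.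
Local Open Scope ring_scope.
Local Open Scope classical_set_scope.
Local Open Scope card_scope.
Set Implicit Arguments. Unset Strict Implicit. Unset Printing Implicit Defensive.
Lemma dist_props (R : realType) (d : nat) (A : 'M[R]_d) : reclusive A ->
  [/\ fine (rdist A) <= 1,
   (forall i j : 'I_d, (i < j)%N -> fine (rdist A) <= 1 - A i j),
   (forall i j : 'I_d, (i < j)%N -> fine (rdist A) <= A i j) &
   (forall i j j' : 'I_d, (i < j)%N -> (j < j')%N -> fine (rdist A) <= A i j - A i j')].
Proof.
case=> _ Adiag Adec.
have h1 : (rdist A <= 1%:E)%E.
  by rewrite /rdist /rdelta1 !ge_min lexx.
have h2 (i j : 'I_d) : (i < j)%N -> (rdist A <= (1 - A i j)%:E)%E.
  move=> ij; rewrite /rdist ge_min; apply/orP; left; rewrite ge_min; apply/orP; right.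
  by apply: le_trans (bigmin_le _ i _) _; apply: bigmin_le_cond.
have h3 (i j : 'I_d) : (i < j)%N -> (rdist A <= (A i j)%:E)%E.
  move=> ij; rewrite /rdist ge_min; apply/orP; right; rewrite ge_min; apply/orP; left.
  by apply: le_trans (bigmin_le _ i _) _; apply: bigmin_le_cond.
have h4 (i j j' : 'I_d) : (i < j)%N -> (j < j')%N -> (rdist A <= (A i j - A i j')%:E)%E.
  move=> ij jj'; rewrite /rdist ge_min; apply/orP; right; rewrite ge_min; apply/orP; right.
  apply: le_trans (bigmin_le _ i _) _; apply: le_trans (bigmin_le_cond _ _ ij) _.
  exact: bigmin_le_cond.
have pos1 (i j : 'I_d) : (i < j)%N -> 0 < 1 - A i j /\ 0 < A i j.
  move=> ij; have [+ ->] := Adec i i j (leqnn _) ij; rewrite Adiag subr_gt0 => -> //.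
have pos4 (i j j' : 'I_d) : (i < j)%N -> (j < j')%N -> 0 < A i j - A i j'.
  move=> ij jj'; have [+ _] := Adec i j j' (ltnW ij) jj'; by rewrite subr_gt0.
move: h1 h2 h3 h4; case: (rdist A) => [r| |] /=.
- move=> h1 h2 h3 h4; split; first by rewrite -lee_fin.
  + by move=> i j ij; rewrite -lee_fin; apply: h2.
  + by move=> i j ij; rewrite -lee_fin; apply: h3.
  + by move=> i j j' ij jj'; rewrite -lee_fin; apply: h4.
- by rewrite leye_eq.
- move=> _ _ _ _; split => //.
  + by move=> i j ij; have [/ltW] := pos1 i j ij.
  + by move=> i j ij; have [_ /ltW] := pos1 i j ij.
  + by move=> i j j' ij jj'; apply/ltW/pos4.
Qed.

Definition Av (R : realType) (d : nat) (A : 'M[R]_d) (v : 'I_d -> int) : 'I_d -> R :=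
  fun i => \sum_(j < d) A i j * (v j)%:~R.
Definition Tsum (R : realType) (d : nat) (A : 'M[R]_d) (u : 'I_d -> int) (i : 'I_d) (n : nat) : R :=
  \sum_(j < d | (n <= j)%N) A i j * (u j)%:~R.

Lemma Tsum_step (R : realType) (d : nat) (A : 'M[R]_d) (u : 'I_d -> int) (i k : 'I_d) :
  Tsum A u i k = A i k * (u k)%:~R + Tsum A u i k.+1.
Proof.
rewrite /Tsum (bigD1 k) //=; congr (_ + _); apply: eq_bigl => j.
by rewrite ltn_neqAle andbC eq_sym.
Qed.

Lemma Tsum_zero (R : realType) (d : nat) (A : 'M[R]_d) (u : 'I_d -> int) (i : 'I_d) (n : nat) :
  (forall j : 'I_d, (n <= j)%N -> u j = 0) -> Tsum A u i n = 0.
Proof. by move=> h; rewrite /Tsum big1 // => j /h ->; rewrite mulr0. Qed.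

Lemma Av_diff (R : realType) (d : nat) (A : 'M[R]_d) (v w : 'I_d -> int) (k : 'I_d) :
  reclusive A ->
  Av A v k - Av A w k = (v k - w k)%:~R + Tsum A (fun j => v j - w j) k k.+1.
Proof.
case=> Alow Adiag _.
rewrite /Av -sumrB.
have -> : \sum_(j < d) (A k j * (v j)%:~R - A k j * (w j)%:~R) =
          Tsum A (fun j => v j - w j) k k.
  rewrite /Tsum [RHS]big_mkcond /=; apply: eq_bigr => j _.
  case: leqP => kj; first by rewrite intrB mulrBr.
  by rewrite Alow // !mul0r subr0.
by rewrite Tsum_step Adiag mul1r.
Qed.

Lemma int_lt_cases (R : realType) (z a b : int) :
  (a%:~R : R) < z%:~R -> (z%:~R : R) < b%:~R -> (a < z < b)%R.
Proof. by rewrite !ltr_int => -> ->. Qed.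

Definition dprops (R : realType) (d : nat) (A : 'M[R]_d) (D : R) : Prop :=
  [/\ D <= 1,
   (forall i j : 'I_d, (i < j)%N -> D <= 1 - A i j),
   (forall i j : 'I_d, (i < j)%N -> D <= A i j) &
   (forall i j j' : 'I_d, (i < j)%N -> (j < j')%N -> D <= A i j - A i j')].

Definition Inv (R : realType) (d : nat) (A : 'M[R]_d) (D : R) (u : 'I_d -> int) (n : nat) : Prop :=
 (forall j : 'I_d, (n <= j)%N -> -1 <= u j <= 1) /\
 ((forall j : 'I_d, (n <= j)%N -> u j = 0) \/
  exists f : 'I_d, exists s : int, [/\ s = 1 \/ s = -1, (n <= f)%N,
     (forall j : 'I_d, (n <= j)%N -> (j < f)%N -> u j = 0), u f = s &
     forall i : 'I_d, (i < n)%N -> [/\ D <= s%:~R * Tsum A u i n, 0 < s%:~R * Tsum A u i n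
        & s%:~R * Tsum A u i n <= A i f]]).

Lemma inv_step (R : realType) (d : nat) (A : 'M[R]_d) (D : R) (u : 'I_d -> int) (k : 'I_d) :
  reclusive A -> dprops A D -> Inv A D u k.+1 ->
  -1 - D < (u k)%:~R + Tsum A u k k.+1 -> (u k)%:~R + Tsum A u k k.+1 < 1 + D ->
  Inv A D u k /\ (forall (f : 'I_d) (s : int), (s = 1 \/ s = -1) -> (k < f)%N ->
     (forall j : 'I_d, (k < j)%N -> (j < f)%N -> u j = 0) -> u f = s -> s * u k <= 0).
Proof.
move=> [Alow Adiag Adec] [D1 D2 D3 D4] [hb hc] hE1 hE2.
have hbk : forall P : int -> Prop, P (u k) -> (forall j : 'I_d, (k.+1 <= j)%N -> P (u j)) ->
    forall j : 'I_d, (k <= j)%N -> P (u j).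
  move=> P Pk Pj j; rewrite leq_eqVlt => /orP [/eqP kj|]; last exact: Pj.
  by have -> : j = k by apply/val_inj.
case: hc => [hz | [f [s [hs hkf hfirst huf hrows]]]].
- have T0 : forall i, Tsum A u i k.+1 = 0 by move=> i; apply: Tsum_zero.
  rewrite T0 addr0 in hE1 hE2.
  have huk : (-2 < u k < 2)%R.
    by apply: (@int_lt_cases R); rewrite ?intrN /=; lra.
  split; last first.
    move=> f s hs kf _ uf; have := hz f kf; lia.
  split; first by apply: (hbk (fun z => -1 <= z <= 1)) => //; lia.
  case: (u k =P 0) => uk0.
    by left; apply: (hbk (fun z => z = 0)).
  right; exists k, (u k); split => //.
  + lia.
  + move=> j kj jk; lia.
  + move=> i ik; rewrite Tsum_step T0 addr0 mulrCA -intrM.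
    have -> : u k * u k = 1.
      by have [->|->] : u k = 1 \/ u k = -1 by lia.
    rewrite mulr1; have [_ Ap] := Adec i i k (leqnn _) ik.
    by split => //; apply: D3.
- have [hr1 hr2 hr3] := hrows k (ltnSn k).
  have Dkf := D2 k f hkf.
  have hsuk : s * u k = 0 \/ s * u k = -1.
    case: hs => hs; rewrite hs ?mulr1z ?mulrN1z in hr1 hr2 hr3 *.
    + have : (-2 < u k < 1)%R by apply: (@int_lt_cases R); rewrite ?intrN /=; lra.
      lia.
    + have : (-1 < u k < 2)%R by apply: (@int_lt_cases R); rewrite ?intrN /=; lra.
      lia.
  split; last first.
    move=> f' s' hs' kf' hfirst' huf'.
    have ff' : f' = f.
      apply/val_inj/eqP; rewrite eqn_leq; apply/andP; split; rewrite leqNgt; apply/negP => lt.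
      - have := hfirst' f hkf lt; lia.
      - have := hfirst f' kf' lt; lia.
    subst f'; lia.
  split; first by apply: (hbk (fun z => -1 <= z <= 1)) => //; lia.
  right; case: hsuk => hsuk.
  + have uk0 : u k = 0 by lia.
    exists f, s; split => //.
    * exact: ltnW.
    * move=> j; rewrite leq_eqVlt => /orP[/eqP kj _|kj]; last exact: hfirst.
      by have -> : j = k by apply/val_inj.
    * move=> i ik; rewrite Tsum_step uk0 mulr0 add0r; exact: hrows i (leqW ik).
  + have uk0 : u k = - s by lia.
    exists k, (- s); split => //.
    * lia.
    * move=> j kj jk; lia.
    * move=> i ik; rewrite Tsum_step uk0.
      have [h1 h2 h3] := hrows i (leqW ik).
      have Dikf := D4 i k f ik hkf.
      have [Aik _] := Adec i k f (ltnW ik) hkf.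
      case: hs => hs; rewrite hs ?opprK ?mulr1z ?mulrN1z in h1 h2 h3 *.
      - split; lra.
      - split; lra.
Qed.

Definition intile (R : realType) (d : nat) (A : 'M[R]_d) (v : 'I_d -> int) (x : 'I_d -> R) :=
  forall i, Av A v i <= x i < Av A v i + 1.

Lemma Ebounds (R : realType) (d : nat) (A : 'M[R]_d) (D : R) (v w : 'I_d -> int) x y (k : 'I_d) :
  reclusive A -> intile A v x -> intile A w y ->
  (forall i, `|x i - y i| <= D) ->
  -1 - D < (v k - w k)%:~R + Tsum A (fun j => v j - w j) k k.+1 /\
  (v k - w k)%:~R + Tsum A (fun j => v j - w j) k k.+1 < 1 + D.
Proof.
move=> hA hv hw hxy.
have hE := Av_diff v w k hA.
have := hv k; have := hw k; have := hxy k; rewrite ler_norml => /andP[h1 h2] /andP[h3 h4] /andP[h5 h6].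
split; lra.
Qed.

Lemma inv_all (R : realType) (d : nat) (A : 'M[R]_d) (D : R) (v w : 'I_d -> int) x y :
  reclusive A -> dprops A D -> intile A v x -> intile A w y ->
  (forall i, `|x i - y i| <= D) ->
  forall m, (m <= d)%N -> Inv A D (fun j => v j - w j) (d - m).
Proof.
move=> hA hD hv hw hxy; elim=> [_|m IH lt].
  rewrite subn0; split; first by move=> j; rewrite leqNgt ltn_ord.
  by left=> j; rewrite leqNgt ltn_ord.
have lt' : (d - m.+1 < d)%N by lia.
set k := Ordinal lt'.
have IH1 := IH (ltnW lt).
have ek : (k.+1 = d - m)%N by rewrite /= ; lia.
rewrite -ek in IH1.
have [E1 E2] := Ebounds k hA hv hw hxy.
by have [I1 I2] := inv_step hA hD IH1 E1 E2.
Qed.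

Lemma KL (R : realType) (d : nat) (A : 'M[R]_d) (D : R) (v w : 'I_d -> int) x y :
  reclusive A -> dprops A D -> intile A v x -> intile A w y ->
  (forall i, `|x i - y i| <= D) ->
  (forall j, -1 <= v j - w j <= 1) /\
  (forall k f : 'I_d, (k < f)%N -> (forall j : 'I_d, (k < j)%N -> (j < f)%N -> v j = w j) ->
     w f < v f -> v k <= w k).
Proof.
move=> hA hD hv hw hxy.
have H := inv_all hA hD hv hw hxy.
have [B0 _] := H d (leqnn d).
have B j : -1 <= v j - w j <= 1 by apply: B0; rewrite subnn.
split => // k f kf hj wf.
have Hk := H (d - k.+1)%N (leq_subr _ _).
rewrite subKn in Hk; last exact: ltn_ord.
have [E1 E2] := Ebounds k hA hv hw hxy.
have [_ H2] := inv_step hA hD Hk E1 E2.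
have := H2 f 1 (or_introl erefl) kf.
have := B f.
move=> Bf /(_ ltac:(move=> j kj jf; rewrite hj //; lia)) /(_ ltac:(lia)).
lia.
Qed.

Definition RecPropA (d : nat) (S : ('I_d -> int) -> Prop) :=
  forall v w, S v -> S w -> forall j, -1 <= v j - w j <= 1.
Definition RecPropB (d : nat) (S : ('I_d -> int) -> Prop) :=
  forall v w, S v -> S w -> forall k f : 'I_d, (k < f)%N ->
    (forall j : 'I_d, (k < j)%N -> (j < f)%N -> v j = w j) -> w f < v f -> v k <= w k.

Definition Split (d : nat) (S : ('I_d -> int) -> Prop) (v : 'I_d -> int) (k : 'I_d) :=
  exists w, [/\ S w, (forall j : 'I_d, (k < j)%N -> w j = v j) & w k < v k].

Lemma F2 (d : nat) (S : ('I_d -> int) -> Prop) (v w : 'I_d -> int) (k j0 : 'I_d) :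
  RecPropA S -> RecPropB S -> S v -> S w -> Split S v k -> Split S w k ->
  (k < j0)%N -> v j0 != w j0 -> False.
Proof.
move=> hA hB Sv Sw [v' [Sv' tv' lv']] [w' [Sw' tw' lw']] kj0 vw0.
have P0 : (k < j0)%N && (v j0 != w j0) by rewrite kj0.
case: (@arg_minnP _ j0 (fun j : 'I_d => (k < j)%N && (v j != w j)) (fun j => nat_of_ord j) P0) => f /andP[kf vwf] fmin.
have agree : forall j : 'I_d, (k < j)%N -> (j < f)%N -> v j = w j.
  move=> j kj jf; apply/eqP; apply/negPn/negP => h.
  have := fmin j; rewrite kj h => /(_ isT); lia.
case: (ltP (w f) (v f)) => [wv|].
- have h1 : v k <= w' k.
    apply: (hB v w' Sv Sw' k f kf) => [j kj jf|]; first by rewrite tw' // agree.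
    by rewrite tw'.
  have := hA w v' Sw Sv' k; lia.
- rewrite le_eqVlt => /orP[/eqP vwe|vw]; first by move: vwf; rewrite vwe eqxx.
  have h1 : w k <= v' k.
    apply: (hB w v' Sw Sv' k f kf) => [j kj jf|]; first by rewrite tv' // agree.
    by rewrite tv'.
  have := hA v w' Sv Sw' k; lia.
Qed.

Definition Qlab (d : nat) (S : ('I_d -> int) -> Prop) (v : 'I_d -> int) (n : nat) : Prop :=
  n = d \/ exists k : 'I_d, nat_of_ord k = n /\ Split S v k.

Lemma Qlab_ex (d : nat) (S : ('I_d -> int) -> Prop) (v : 'I_d -> int) :
  exists n, (fun n => `[< Qlab S v n >]) n.
Proof. by exists d; apply/asboolP; left. Qed.

Definition lab (d : nat) (S : ('I_d -> int) -> Prop) (v : 'I_d -> int) : nat :=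
  ex_minn (Qlab_ex S v).

Lemma labP (d : nat) (S : ('I_d -> int) -> Prop) (v : 'I_d -> int) :
  Qlab S v (lab S v) /\ (forall n, Qlab S v n -> (lab S v <= n)%N).
Proof.
rewrite /lab; case: ex_minnP => m /asboolP Qm minm; split => // n Qn.
by apply: minm; apply/asboolP.
Qed.

Lemma lab_le (d : nat) (S : ('I_d -> int) -> Prop) (v : 'I_d -> int) : (lab S v <= d)%N.
Proof. by have [_ h] := labP S v; apply: h; left. Qed.

Lemma lab_aux (d : nat) (S : ('I_d -> int) -> Prop) (v w : 'I_d -> int) (k0 : 'I_d) :
  RecPropA S -> RecPropB S -> S v -> S w -> w k0 < v k0 ->
  (forall j : 'I_d, (k0 < j)%N -> v j = w j) -> lab S v = lab S w -> False.
Proof.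
move=> hA hB Sv Sw wv0 tl el.
have [Qv minv] := labP S v.
have [Qw _] := labP S w.
have spl : Split S v k0 by exists w; split => // j /tl ->.
have lek0 : (lab S v <= k0)%N by apply: minv; right; exists k0.
rewrite -el in Qw.
case: Qv => [ed|[k1 [ek1 sv]]]; first by have := ltn_ord k0; lia.
case: Qw => [ed|[k2 [ek2 sw]]]; first by have := ltn_ord k0; lia.
have e12 : k2 = k1 by apply/val_inj; rewrite /= ek1 ek2.
subst k2.
case: (ltngtP k1 k0) => [lt|gt|eq].
- by apply: (F2 hA hB Sv Sw sv sw lt); rewrite neq_lt wv0 orbT.
- lia.
- have e : k1 = k0 by apply/val_inj.
  subst k1.
  case: sw => w' [Sw' tw' lw'].
  have := hA v w' Sv Sw' k0; lia.
Qed.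

Lemma lab_inj (d : nat) (S : ('I_d -> int) -> Prop) (v w : 'I_d -> int) :
  RecPropA S -> RecPropB S -> S v -> S w -> lab S v = lab S w -> v = w.
Proof.
move=> hA hB Sv Sw el.
case: (pselect (exists j, v j != w j)) => [[j0 hj0]|nj]; last first.
  apply: funext => j; apply/eqP; apply/negPn/negP => h; apply: nj; by exists j.
case: (@arg_maxnP _ j0 (fun j : 'I_d => v j != w j) (fun j => nat_of_ord j) hj0) => k0 vw0 kmax.
have tl : forall j : 'I_d, (k0 < j)%N -> v j = w j.
  move=> j kj; apply/eqP; apply/negPn/negP => h; have := kmax j h; lia.
exfalso; case: (ltP (w k0) (v k0)) => [wv|].
- exact: (lab_aux hA hB Sv Sw wv tl el).
- rewrite le_eqVlt => /orP[/eqP e|vw]; first by move: vw0; rewrite e eqxx.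
  by apply: (lab_aux hA hB Sw Sv vw) => // j /tl ->.
Qed.

Definition Sset (R : realType) (d : nat) (A : 'M[R]_d) (eps : R) (p : 'I_d -> R) (v : 'I_d -> int) :=
  exists x, intile A v x /\ cball eps p x.

Lemma Sset_props (R : realType) (d : nat) (A : 'M[R]_d) (D : R) (p : 'I_d -> R) :
  reclusive A -> dprops A D -> (RecPropA (Sset A (D / 2) p)) /\ (RecPropB (Sset A (D / 2) p)).
Proof.
move=> hA hD.
have H : forall v w, Sset A (D / 2) p v -> Sset A (D / 2) p w ->
  (forall j, -1 <= v j - w j <= 1) /\
  (forall k f : 'I_d, (k < f)%N -> (forall j : 'I_d, (k < j)%N -> (j < f)%N -> v j = w j) ->
     w f < v f -> v k <= w k).
  move=> v w [x [hx bx]] [y [hy byy]]; apply: (KL hA hD hx hy) => i.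
  have := bx i; have := byy i; rewrite !ler_norml => /andP[h1 h2] /andP[h3 h4].
  apply/andP; split; lra.
split=> v w Sv Sw; first by have [] := H v w Sv Sw.
by have [_] := H v w Sv Sw.
Qed.

Unset Implicit Arguments.
Theorem mainTheorem10 (R : realType) (d : nat) (A : 'M[R]_d) :
  reclusive A ->
  forall p : 'I_d -> R,
    neighbours A (fine (rdist A) / 2) p #<= `I_(d.+1).
Proof.
move=> hA p.
set D := fine (rdist A).
have hD : dprops A D by exact: dist_props.
have [pa pb] := Sset_props p hA hD.
set S := Sset A (D / 2) p.
have vofE : forall X, neighbours A (D / 2) p X -> exists v, S v /\ X = tile (Av A v).
  move=> X [[a [v ->] ->] [x [hx bx]]].
  by exists v; split => //; exists x.
pose vof X := match pselect (exists v, S v /\ X = tile (Av A v)) with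
  | left e => projT1 (cid e) | right _ => fun _ => 0%R end.
have vofP : forall X, neighbours A (D / 2) p X -> S (vof X) /\ X = tile (Av A (vof X)).
  move=> X hX; rewrite /vof; case: pselect => [e|]; last by move/(_ (vofE X hX)).
  by case: (cid e).
apply/pcard_leP/injfunPex; exists (fun X => lab S (vof X)).
  by move=> X _ /=; rewrite ltnS lab_le.
move=> X Y; rewrite !inE => hX hY el.
have [SX eX] := vofP X hX; have [SY eY] := vofP Y hY.
by rewrite eX eY (lab_inj pa pb SX SY el).
Qed.
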